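(* Let $f(z)=e^z$ and $U=\mathbb{C}\setminus[0,\infty)$. Then $\|\mathrm{D} f(\zeta)\|_U^U>1$ for all $\zeta\in f^{-1}(U)$. Moreover, if $(\zeta_n)$ is a sequence in $f^{-1}(U)$ with $\|\mathrm{D} f(\zeta_n)\|_U^U\to 1$ as $n\to\infty$, then $\min\bigl(|\zeta_n|,\mathrm{Arg}(\zeta_n)\bigr)\to 0$ as $n\to\infty$.
   Context: The hyperbolic metric on $U=\mathbb{C}\setminus[0,\infty)$ has density $\rho_U(z)=\dfrac{1}{2|z|\sin(\arg(z)/2)}$, where $\arg(z)\in(0,2\pi)$. For $\zeta\in f^{-1}(U)$ the hyperbolic derivative is $\|\mathrm{D} f(\zeta)\|_U^U = |f'(\zeta)|\cdot \rho_U(f(\zeta))/\rho_U(\zeta)$. $\mathrm{Arg}(z)\in(-\pi,\pi]$ denotes the principal argument. *)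

(* Defs.v *)
(* complex numbers are modelled as pairs (Re, Im) of Stdlib reals. *)
From Stdlib Require Import Reals.
Open Scope R_scope.

Definition Cpx : Type := (R * R)%type.

Definition Cnorm (z : Cpx) : R := sqrt (fst z ^ 2 + snd z ^ 2).

Definition Cexp (z : Cpx) : Cpx :=
  (exp (fst z) * cos (snd z), exp (fst z) * sin (snd z)).

(* principal argument Arg z in (-pi, pi] (standard atan2); Arg 0 := 0 by convention *)
Definition Arg (z : Cpx) : R :=
  let a := fst z in let b := snd z in
  if Rlt_dec 0 a then atan (b / a)
  else if Rlt_dec a 0 then
    (if Rle_dec 0 b then atan (b / a) + PI else atan (b / a) - PI)
  else if Rlt_dec 0 b then PI / 2
  else if Rlt_dec b 0 then - (PI / 2)
  else 0.

Definition in_U (z : Cpx) : Prop := ~ (snd z = 0 /\ 0 <= fst z).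

(* arg z in (0, 2 pi), for z in U *)
Definition arg02 (z : Cpx) : R :=
  if Rlt_dec 0 (Arg z) then Arg z else Arg z + 2 * PI.

(* hyperbolic density of U *)
Definition rho_U (z : Cpx) : R := 1 / (2 * Cnorm z * sin (arg02 z / 2)).

(* hyperbolic derivative ||D f(zeta)||_U^U of f = exp; f' = exp so |f'(zeta)| = |e^zeta| *)
Definition hypDerivExp (zeta : Cpx) : R :=
  Cnorm (Cexp zeta) * rho_U (Cexp zeta) / rho_U zeta.

(* Main.v *)
Require Import Defs.
From Stdlib Require Import Reals Lra Psatz.
Open Scope R_scope.

Lemma sin_sq_lt t : t <> 0 -> sin t ^ 2 < t ^ 2.
Proof.
  intro Ht.
  assert (H: forall u, 0 < u -> sin u ^ 2 < u ^ 2).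
  { intros u Hu. pose proof (sin_lt_x u Hu). pose proof PI2_1.
    pose proof (SIN_bound u).
    destruct (Rle_lt_dec u 1).
    - assert (0 < sin u) by (apply sin_gt_0; lra). nra.
    - nra. }
  destruct (Rlt_dec 0 t). apply H; auto.
  assert (0 < - t) by lra. specialize (H _ H0). rewrite sin_neg in H. nra.
Qed.

Lemma one_minus_cos_lt y : y <> 0 -> 1 - cos y < y ^ 2 / 2.
Proof.
  intro Hy. replace y with (2 * (y/2)) at 1 by field.
  rewrite cos_2a_sin. assert (y/2 <> 0) by lra.
  pose proof (sin_sq_lt _ H). nra.
Qed.

Lemma cnorm_pos z : in_U z -> 0 < Cnorm z.
Proof.
  unfold in_U, Cnorm; destruct z as [x y]; simpl; intro H.
  apply sqrt_lt_R0.
  destruct (Req_dec y 0). subst. assert (x < 0) by (destruct (Rle_dec 0 x); [exfalso; auto|lra]). nra.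
  nra.
Qed.

Lemma cnorm_sq z : Cnorm z ^ 2 = fst z ^ 2 + snd z ^ 2.
Proof. unfold Cnorm. apply pow2_sqrt. nra. Qed.

Lemma cos_arg z : in_U z -> cos (Arg z) * Cnorm z = fst z.
Proof.
  intro HU. pose proof (cnorm_pos z HU) as Hr. pose proof (cnorm_sq z) as Hs.
  destruct z as [x y]; simpl in *. unfold Arg; simpl.
  set (r := Cnorm (x, y)) in *.
  assert (Hc: forall t, 0 < x \/ x < 0 -> t = y / x -> cos (atan t) * r = Rabs x).
  { intros t Hx ->. rewrite cos_atan.
    assert (Hq: sqrt (1 + (y / x)²) = r / Rabs x).
    { apply sqrt_lem_1. unfold Rsqr. apply Rplus_le_le_0_compat. lra. nra.
      unfold Rdiv. apply Rmult_le_pos. lra. left. apply Rinv_0_lt_compat. apply Rabs_pos_lt. lra.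
      assert (Ha: Rabs x * Rabs x = x * x) by (rewrite <- Rabs_mult; apply Rabs_pos_eq; nra).
      assert (Rabs x <> 0) by (apply Rabs_no_R0; lra).
      unfold Rsqr. unfold Rdiv. rewrite (Rmult_comm r), (Rmult_comm y).
      replace (/ Rabs x * r * (/ Rabs x * r)) with (r * r / (Rabs x * Rabs x)) by (field; auto).
      rewrite Ha. replace (r * r) with (x*x + y*y) by lra. field. lra. }
    rewrite Hq. field. split. apply Rabs_no_R0; lra. lra. }
  destruct (Rlt_dec 0 x).
  - rewrite (Hc (y/x)); auto. apply Rabs_pos_eq; lra.
  - destruct (Rlt_dec x 0).
    + destruct (Rle_dec 0 y).
      * rewrite neg_cos. rewrite <- Ropp_mult_distr_l, (Hc (y/x)); auto. rewrite Rabs_left; lra.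
      * unfold Rminus. rewrite <- (cos_period (atan (y/x) + - PI) 1). simpl.
        replace (atan (y / x) + - PI + 2 * 1 * PI) with (atan (y/x) + PI) by ring.
        rewrite neg_cos. rewrite <- Ropp_mult_distr_l, (Hc (y/x)); auto. rewrite Rabs_left; lra.
    + assert (x = 0) by lra. subst x.
      destruct (Rlt_dec 0 y). rewrite cos_PI2; ring.
      destruct (Rlt_dec y 0). rewrite cos_neg, cos_PI2; ring.
      exfalso; apply HU; split; simpl; lra.
Qed.

Lemma arg_range z : in_U z -> - PI < Arg z <= PI /\ Arg z <> 0.
Proof.
  intro HU. destruct z as [x y]; unfold Arg, in_U in *; simpl in *.
  pose proof PI_RGT_0.
  destruct (Rlt_dec 0 x).
  - pose proof (atan_bound (y/x)). split. lra.
    intro E. apply atan_eq0 in E. apply HU. split; [|lra].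
    assert (y = y / x * x) by (field; lra). rewrite H1, E; ring.
  - destruct (Rlt_dec x 0).
    + pose proof (atan_bound (y/x)).
      destruct (Rle_dec 0 y).
      * assert (atan (y/x) <= 0).
        { rewrite <- atan_0. destruct (Req_dec y 0). subst. unfold Rdiv. rewrite Rmult_0_l. lra.
          left. apply atan_increasing. apply Rdiv_pos_neg; lra. }
        lra.
      * assert (0 < atan (y/x)).
        { rewrite <- atan_0. apply atan_increasing. replace (y/x) with ((-y)/(-x)) by (field; lra). apply Rdiv_lt_0_compat; lra. }
        lra.
    + destruct (Rlt_dec 0 y). lra.
      destruct (Rlt_dec y 0). lra.
      exfalso. apply HU. lra.
Qed.

Lemma key z : in_U z ->
  0 < sin (arg02 z / 2) /\ sin (arg02 z / 2) ^ 2 * 2 * Cnorm z = Cnorm z - fst z.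
Proof.
  intro HU. pose proof (arg_range z HU) as [[H1 H2] H3].
  pose proof (cos_arg z HU) as Hc. pose proof PI_RGT_0.
  assert (Hr: 0 < arg02 z < 2 * PI /\ cos (arg02 z) = cos (Arg z)).
  { unfold arg02. destruct (Rlt_dec 0 (Arg z)). lra.
    split. lra. rewrite cos_plus, cos_2PI, sin_2PI; ring. }
  destruct Hr as [Hr Hcos].
  split. apply sin_gt_0; lra.
  assert (Hd: cos (arg02 z) = 1 - 2 * sin (arg02 z / 2) * sin (arg02 z / 2)).
  { rewrite <- cos_2a_sin. f_equal. field. }
  rewrite <- Hc, <- Hcos, Hd. ring.
Qed.

Lemma cnorm_exp zeta : Cnorm (Cexp zeta) = exp (fst zeta).
Proof.
  unfold Cnorm, Cexp; simpl. apply sqrt_lem_1. nra. left; apply exp_pos.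
  pose proof (sin2_cos2 (snd zeta)). unfold Rsqr in H. nra.
Qed.

Lemma main_rel zeta : in_U (Cexp zeta) ->
  let h := hypDerivExp zeta in
  let r := Cnorm zeta in let x := fst zeta in let y := snd zeta in
  0 < h /\ h ^ 2 * (1 - cos y) = r * (r - x) /\ y <> 0 /\ r ^ 2 = x^2 + y^2 /\ 0 < r.
Proof.
  intros HU h r x y.
  assert (Hy: y <> 0).
  { intro E. apply HU. unfold Cexp. simpl. fold y. rewrite E, sin_0, cos_0.
    split. ring. pose proof (exp_pos (fst zeta)). lra. }
  assert (HUz: in_U zeta) by (unfold in_U; intros [E _]; auto).
  pose proof (key _ HU) as [sE HE]. pose proof (key _ HUz) as [sz Hz].
  pose proof (cnorm_pos _ HUz) as Hrp. fold r in Hz, Hrp.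
  rewrite cnorm_exp in HE. pose proof (exp_pos (fst zeta)).
  assert (HE2: sin (arg02 (Cexp zeta) / 2) ^ 2 * 2 = 1 - cos y).
  { assert (Hf: fst (Cexp zeta) = exp (fst zeta) * cos y) by reflexivity.
    rewrite Hf in HE. apply Rmult_eq_reg_r with (exp (fst zeta)). 2: lra.
    rewrite HE. ring. }
  assert (Hh: h = r * sin (arg02 zeta / 2) / sin (arg02 (Cexp zeta) / 2)).
  { unfold h, hypDerivExp, rho_U. rewrite cnorm_exp. fold r. field. repeat split; lra. }
  split. rewrite Hh. apply Rdiv_lt_0_compat; nra.
  split. rewrite Hh, <- HE2. fold x in Hz. rewrite <- Hz. field. lra.
  split. auto. split. apply cnorm_sq. auto.
Qed.

Theorem mainTheorem4 :
  (forall zeta : Cpx, in_U (Cexp zeta) -> hypDerivExp zeta > 1) /\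
  (forall zs : nat -> Cpx,
     (forall n, in_U (Cexp (zs n))) ->
     Un_cv (fun n => hypDerivExp (zs n)) 1 ->
     Un_cv (fun n => Rmin (Cnorm (zs n)) (Arg (zs n))) 0).
Proof.
  split.
  - intros zeta HU. destruct (main_rel zeta HU) as (Hh & Heq & Hy & Hr2 & Hr).
    set (h := hypDerivExp zeta) in *. set (r := Cnorm zeta) in *.
    set (x := fst zeta) in *. set (y := snd zeta) in *.
    pose proof (one_minus_cos_lt y Hy) as Hc.
    assert (Hyy: 0 < y^2) by (assert (Rsqr y > 0) by (apply Rsqr_pos_lt; auto); unfold Rsqr in *; nra).
    assert (Hge: r * (r - x) - y^2/2 = (r - x)^2/2) by nra.
    assert (H1: r * (r - x) > 1 - cos y) by nra.
    assert (H2: 0 < 1 - cos y).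
    { destruct (Rle_lt_dec (1 - cos y) 0); auto. pose proof (COS_bound y). nra. }
    assert (h ^ 2 > 1).
    { apply Rmult_gt_reg_r with (1 - cos y). lra. lra. }
    nra.
  - intros zs HU Hcv eps Heps.
    set (e := Rmin eps 1).
    assert (He: 0 < e <= eps /\ e <= 1).
    { unfold e, Rmin; destruct (Rle_dec eps 1); lra. }
    pose proof PI2_1.
    assert (Ht: 0 < tan e) by (apply tan_gt_0; lra).
    set (t := tan e) in *.
    set (d := Rmin (1/2) (t^2/16)).
    assert (Hd: 0 < d <= 1/2 /\ d <= t^2/16).
    { unfold d, Rmin; destruct (Rle_dec (1/2) (t^2/16)); split; try lra; nra. }
    destruct (Hcv (d/3)) as [N HN]. lra.
    exists N. intros n Hn. specialize (HN n Hn). unfold R_dist in *.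
    destruct (main_rel (zs n) (HU n)) as (Hh & Heq & Hy & Hr2 & Hr).
    pose proof (Rabs_def2 _ _ HN) as [Hu Hl].
    set (h := hypDerivExp (zs n)) in *. set (r := Cnorm (zs n)) in *.
    set (x := fst (zs n)) in *. set (y := snd (zs n)) in *.
    pose proof (one_minus_cos_lt y Hy) as Hc.
    assert (Hyy: 0 < y^2) by (assert (Rsqr y > 0) by (apply Rsqr_pos_lt; auto); unfold Rsqr in *; nra).
    assert (Hh2: h^2 < 1 + d) by nra.
    assert (Hrx: 0 < r - x) by nra.
    assert (Hrx2: 0 < r + x).
    { destruct (Rle_lt_dec (r + x) 0); auto. exfalso.
      assert (0 <= cos y + 1) by (pose proof (COS_bound y); lra).
      assert (h^2 * (1 - cos y) < (r - x) * (r + x) / 2) by nra.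
      assert (r * (r - x) <= (r - x) * (r + x) / 2) by nra. nra. }
    assert (Hk: h^2 * (r + x) > 2 * r).
    { assert (h^2 * (1 - cos y) < h^2 * (y^2/2) \/ h^2 * (1 - cos y) <= h^2 * (y^2/2)) by nra.
      assert (h^2 * (1 - cos y) <= h^2 * (y^2/2)) by nra.
      assert (y^2 = (r - x) * (r + x)) by nra.
      assert ((r - x) * (h^2 * (r + x) - 2 * r) >= 0) by nra.
      assert (h^2 * (r + x) - 2 * r >= 0) by nra.
      destruct (Req_dec (h^2 * (r + x)) (2 * r)); [|lra].
      exfalso. assert (h^2 * (1 - cos y) = h^2 * (y^2/2)) by nra.
      assert (h^2 > 0) by nra. nra. }
    assert (Hx1: x * (1 + d) > r * (1 - d)) by nra.
    assert (Hxp: 0 < x) by nra.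
    assert (Hyt: y^2 < t^2 * x^2).
    { assert (x^2 * (1+d)^2 > r^2 * (1-d)^2).
      { assert (r * (1 - d) > 0) by nra.
        replace (x^2 * (1+d)^2) with ((x*(1+d))*(x*(1+d))) by ring.
        replace (r^2 * (1-d)^2) with ((r*(1-d))*(r*(1-d))) by ring. nra. }
      assert (H4: y^2 * (1-d)^2 < 4 * d * x^2) by nra.
      assert (H5a: (1-d)^2 >= 1/4) by nra.
      assert (H5: y^2 * (1/4) <= y^2 * (1-d)^2) by nra.
      assert (H6: 16 * d * x^2 <= t^2 * x^2) by nra.
      nra. }
    assert (Hq: (y/x)^2 < t^2).
    { replace ((y/x)^2) with (y^2 / x^2) by (field; lra).
      apply Rmult_lt_reg_r with (x^2). nra. field_simplify; nra. }
    assert (Hq1: - t < y / x < t) by nra.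
    assert (HA: Arg (zs n) = atan (y / x)).
    { unfold Arg. fold x y. destruct (Rlt_dec 0 x); [reflexivity|lra]. }
    assert (Hat: - e < atan (y/x) < e).
    { split.
      - replace (-e) with (atan (tan (-e))). apply atan_increasing. rewrite tan_neg. fold t. lra.
        apply atan_tan. lra.
      - assert (Hte: atan t = e) by (unfold t; apply atan_tan; lra). rewrite <- Hte. apply atan_increasing; lra. }
    rewrite Rminus_0_r. rewrite HA.
    apply Rabs_def1; unfold Rmin; destruct (Rle_dec r (atan (y/x))); lra.
Qed.
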